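(* $\gamma_{2t}(K_2\Box K_3)=4$, $\gamma_{2t}(K_3\Box K_4)=6$, $\gamma_{2t}(K_4\Box K_5)=7$, $\gamma_{2t}(K_5\Box K_6)=9$, $\gamma_{2t}(K_6\Box K_7)=10$, $\gamma_{2t}(K_2\Box K_4)=4$, $\gamma_{2t}(K_3\Box K_5)=6$, $\gamma_{2t}(K_4\Box K_6)=8$, $\gamma_{2t}(K_5\Box K_7)=9$, $\gamma_{2t}(K_6\Box K_8)=11$ and $\gamma_{2t}(K_7\Box K_9)=13$.
   Context: For a graph $G=(V,E)$, a set $S\subseteq V$ is a total $2$-dominating set if every vertex of $V$ (including those in $S$) is adjacent to at least $2$ vertices of $S$; $\gamma_{2t}(G)$ is the minimum cardinality of such a set. $G\Box H$ denotes the Cartesian product: vertex set $V(G)\times V(H)$, with $(u_1,v_1)\sim(u_2,v_2)$ iff either $u_1=u_2$ and $v_1\sim v_2$, or $v_1=v_2$ and $u_1\sim u_2$. $K_n$ is the complete graph on $n$ vertices. *)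

(* Defs.v *)
From mathcomp Require Import all_boot.
Set Implicit Arguments. Unset Strict Implicit. Unset Printing Implicit Defensive.

Definition complete_rel (n : nat) : rel 'I_n := fun u v => u != v.

Definition cart_rel (T U : finType) (eG : rel T) (eH : rel U) : rel (T * U) :=
  fun x y => ((x.1 == y.1) && eH x.2 y.2) || ((x.2 == y.2) && eG x.1 y.1).

Definition nbhd (T : finType) (e : rel T) (v : T) : {set T} := [set u | e v u].

Definition total2dom (T : finType) (e : rel T) (S : {set T}) : bool :=
  [forall v, 2 <= #|nbhd e v :&: S|].

Definition is_gamma2t (T : finType) (e : rel T) (k : nat) : Prop :=
  (exists S : {set T}, total2dom e S /\ #|S| = k) /\
  (forall S : {set T}, total2dom e S -> k <= #|S|).

Definition KK (m n : nat) : rel ('I_m * 'I_n) :=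
  @cart_rel (ordinal m) (ordinal n) (@complete_rel m) (@complete_rel n).
Arguments KK m n : clear implicits.
Arguments complete_rel n : clear implicits.

(* Main.v *)
Require Import Defs.
From mathcomp Require Import all_boot.
From mathcomp Require Import zify.
Set Implicit Arguments. Unset Strict Implicit. Unset Printing Implicit Defensive.

Section G.
Variables m n : nat.
Notation V := ('I_m * 'I_n)%type.
Variable S : {set V}.

Definition rr (i : 'I_m) := \sum_(u : V) ((u.1 == i) && (u \in S)).
Definition cc (j : 'I_n) := \sum_(u : V) ((u.2 == j) && (u \in S)).

Lemma card_sum (A : {set V}) : #|A| = \sum_(u : V) (u \in A).
Proof. by rewrite -sum1_card big_mkcond /=; apply: eq_bigr => u _; case: (u \in A). Qed.

Lemma pt (u v : V) :
  ((KK m n v u) && (u \in S)) + 2 * ((u == v) && (u \in S)) =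
  ((u.1 == v.1) && (u \in S)) + ((u.2 == v.2) && (u \in S)).
Proof.
case: u v => [a b] [i j]; rewrite /KK /cart_rel /complete_rel /= xpair_eqE.
case: (eqVneq a i) => [->|ne1]; case: (eqVneq b j) => [->|ne2];
  case: (_ \in S); rewrite ?eqxx //= ?(negbTE ne1) ?(negbTE ne2) ?(eq_sym i) ?(eq_sym j) ?ne1 ?ne2 ?(negbTE ne1) ?(negbTE ne2) //=.
Qed.

Lemma L1 (v : V) :
  #|nbhd (KK m n) v :&: S| + 2 * (v \in S) = rr v.1 + cc v.2.
Proof.
rewrite card_sum /rr /cc -big_split /=.
have -> : 2 * (v \in S) = \sum_(u : V) 2 * ((u == v) && (u \in S)).
  rewrite (bigD1 v) //= eqxx big1 ?addn0 // => u /negbTE ->; by rewrite muln0.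
rewrite -big_split /=; apply: eq_bigr => u _.
by rewrite -pt !inE.
Qed.

Lemma L4r (f : 'I_m -> nat) : \sum_i f i * rr i = \sum_(u : V) (u \in S) * f u.1.
Proof.
rewrite /rr.
under eq_bigr do rewrite big_distrr /=.
rewrite exchange_big /=; apply: eq_bigr => u _.
rewrite (bigD1 u.1) //= eqxx big1 ?addn0; first by rewrite mulnC.
by move=> i; rewrite eq_sym => /negbTE ->; rewrite muln0.
Qed.

Lemma L4c (f : 'I_n -> nat) : \sum_j f j * cc j = \sum_(u : V) (u \in S) * f u.2.
Proof.
rewrite /cc.
under eq_bigr do rewrite big_distrr /=.
rewrite exchange_big /=; apply: eq_bigr => u _.
rewrite (bigD1 u.2) //= eqxx big1 ?addn0; first by rewrite mulnC.
by move=> i; rewrite eq_sym => /negbTE ->; rewrite muln0.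
Qed.

Lemma cardS_r : #|S| = \sum_i rr i.
Proof.
rewrite (eq_bigr (fun i => 1 * rr i)); last by move=> i _; rewrite mul1n.
by rewrite L4r card_sum; apply: eq_bigr => u _; rewrite muln1.
Qed.

Lemma cardS_c : #|S| = \sum_j cc j.
Proof.
rewrite (eq_bigr (fun i => 1 * cc i)); last by move=> i _; rewrite mul1n.
by rewrite L4c card_sum; apply: eq_bigr => u _; rewrite muln1.
Qed.

Lemma rr_ord i : rr i = \sum_(j < n) ((i, j) \in S).
Proof.
rewrite /rr (eq_bigr (fun u => nat_of_bool ((u.1 == i) && ((u.1,u.2) \in S)))); last by case.
rewrite -(pair_bigA _ (fun a b => nat_of_bool ((a == i) && ((a, b) \in S)))) /=.
rewrite (bigD1 i) //= [X in _ + X]big1 ?addn0; last first.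
  by move=> k /negbTE nk; apply: big1 => j _; rewrite nk.
by apply: eq_bigr => j _; rewrite eqxx.
Qed.

Lemma cc_ord j : cc j = \sum_(i < m) ((i, j) \in S).
Proof.
rewrite /cc (eq_bigr (fun u => nat_of_bool ((u.2 == j) && ((u.1,u.2) \in S)))); last by case.
rewrite -(pair_bigA _ (fun a b => nat_of_bool ((b == j) && ((a, b) \in S)))) /=.
rewrite exchange_big (bigD1 j) //= [X in _ + X]big1 ?addn0; last first.
  by move=> k /negbTE nk; apply: big1 => i _; rewrite nk.
by apply: eq_bigr => i _; rewrite eqxx.
Qed.


Hypothesis HS : total2dom (KK m n) S.

Lemma dom (v : V) : 2 + 2 * (v \in S) <= rr v.1 + cc v.2.
Proof. rewrite -L1; have := forallP HS v; lia. Qed.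

Definition n0R := \sum_i (rr i == 0).
Definition n1R := \sum_i (rr i == 1).
Definition n2R := \sum_i (rr i == 2).
Definition n3R := \sum_i (2 < rr i).
Definition DR := \sum_i (2 < rr i) * rr i.
Definition n0C := \sum_j (cc j == 0).
Definition n1C := \sum_j (cc j == 1).
Definition n2C := \sum_j (cc j == 2).
Definition n3C := \sum_j (2 < cc j).
Definition DC := \sum_j (2 < cc j) * cc j.

Lemma pt4 (x : nat) : (x == 0) + (x == 1) + (x == 2) + (2 < x) = 1.
Proof. by case: x => [|[|[|x]]]. Qed.
Lemma pt5 (x : nat) : x = (x == 1) + 2 * (x == 2) + (2 < x) * x.
Proof. by case: x => [|[|[|x]]] //=; rewrite mul1n. Qed.
Lemma pt6 (x : nat) : 3 * (2 < x) <= (2 < x) * x.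
Proof. by case: x => [|[|[|x]]] //=; rewrite mul1n. Qed.

Lemma fR1 : n0R + n1R + n2R + n3R = m.
Proof.
rewrite /n0R /n1R /n2R /n3R -!big_split /=.
rewrite -[RHS](card_ord m) -sum1_card; apply: eq_bigr => i _; exact: pt4.
Qed.
Lemma fC1 : n0C + n1C + n2C + n3C = n.
Proof.
rewrite /n0C /n1C /n2C /n3C -!big_split /=.
rewrite -[RHS](card_ord n) -sum1_card; apply: eq_bigr => i _; exact: pt4.
Qed.
Lemma fR2 : #|S| = n1R + 2 * n2R + DR.
Proof.
rewrite cardS_r /n1R /n2R /DR big_distrr -!big_split /=.
by apply: eq_bigr => i _; rewrite -pt5.
Qed.
Lemma fC2 : #|S| = n1C + 2 * n2C + DC.
Proof.
rewrite cardS_c /n1C /n2C /DC big_distrr -!big_split /=.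
by apply: eq_bigr => i _; rewrite -pt5.
Qed.
Lemma fR3 : 3 * n3R <= DR.
Proof. rewrite /n3R /DR big_distrr; apply: leq_sum => i _; exact: pt6. Qed.
Lemma fC3 : 3 * n3C <= DC.
Proof. rewrite /n3C /DC big_distrr; apply: leq_sum => i _; exact: pt6. Qed.

Lemma fR4 : n1R <= DC.
Proof.
have -> : n1R = \sum_i (rr i == 1) * rr i.
  by apply: eq_bigr => i _; case: eqP => [->|].
rewrite L4r /DC L4c; apply: leq_sum => u _.
case Su: (u \in S) => //; rewrite !mul1n.
case: eqP => // r1; have := dom u; rewrite Su r1; lia.
Qed.
Lemma fC4 : n1C <= DR.
Proof.
have -> : n1C = \sum_i (cc i == 1) * cc i.
  by apply: eq_bigr => i _; case: eqP => [->|].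
rewrite L4c /DR L4r; apply: leq_sum => u _.
case Su: (u \in S) => //; rewrite !mul1n.
case: eqP => // r1; have := dom u; rewrite Su r1; lia.
Qed.

Lemma fR5 : 0 < n0R -> n0C + n1C = 0.
Proof.
move=> H.
have [i Hi] : exists i, rr i == 0.
  apply/existsP; apply: contraTT H => /existsPn H.
  by rewrite lt0n negbK /n0R big1 // => i _; rewrite (negbTE (H i)).
rewrite /n0C /n1C -big_split big1 // => j _.
have := dom (i, j); rewrite (eqP Hi) /=.
by case: eqP => [->|]; case: eqP => [->|] //.
Qed.
Lemma fC5 : 0 < n0C -> n0R + n1R = 0.
Proof.
move=> H.
have [j Hj] : exists j, cc j == 0.
  apply/existsP; apply: contraTT H => /existsPn H.
  by rewrite lt0n negbK /n0C big1 // => i _; rewrite (negbTE (H i)).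
rewrite /n0R /n1R -big_split big1 // => i _.
have := dom (i, j); rewrite (eqP Hj) /= addn0.
by case: eqP => [->|]; case: eqP => [->|] //.
Qed.

End G.

Lemma lower m n (S : {set 'I_m * 'I_n}) : total2dom (KK m n) S ->
  exists a0 a1 a2 a3 ad b0 b1 b2 b3 bd,
  a0 + a1 + a2 + a3 = m /\ b0 + b1 + b2 + b3 = n /\
      #|S| = a1 + 2 * a2 + ad /\ #|S| = b1 + 2 * b2 + bd /\
      3 * a3 <= ad /\ 3 * b3 <= bd /\
      a1 <= bd /\ b1 <= ad /\
      (a0 = 0 \/ b0 + b1 = 0) /\ (b0 = 0 \/ a0 + a1 = 0).
Proof.
move=> H.
exists (n0R S), (n1R S), (n2R S), (n3R S), (DR S),
       (n0C S), (n1C S), (n2C S), (n3C S), (DC S).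
split; first exact: fR1. split; first exact: fC1. split; first exact: fR2.
split; first exact: fC2. split; first exact: fR3. split; first exact: fC3.
split; first exact: fR4. split; first exact: fC4.
split.
- case: (posnP (n0R S)); [by left | by move=> /(fR5 H); right].
- case: (posnP (n0C S)); [by left | by move=> /(fC5 H); right].
Qed.

Lemma lbgen m n k (S : {set 'I_m * 'I_n}) :
  (forall a0 a1 a2 a3 ad b0 b1 b2 b3 bd e : nat,
  a0 + a1 + a2 + a3 = m -> b0 + b1 + b2 + b3 = n ->
      e = a1 + 2 * a2 + ad -> e = b1 + 2 * b2 + bd ->
      3 * a3 <= ad -> 3 * b3 <= bd ->
      a1 <= bd -> b1 <= ad ->
      (a0 = 0 \/ b0 + b1 = 0) -> (b0 = 0 \/ a0 + a1 = 0) -> k <= e) ->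
  total2dom (KK m n) S -> k <= #|S|.
Proof.
move=> Hk /lower [a0 [a1 [a2 [a3 [ad [b0 [b1 [b2 [b3 [bd]]]]]]]]]].
move=> [h1 [h2 [h3 [h4 [h5 [h6 [h7 [h8 [h9 h10]]]]]]]]].
exact: (Hk a0 a1 a2 a3 ad b0 b1 b2 b3 bd).
Qed.

Definition inl (l : seq (nat * nat)) (a b : nat) : bool :=
  has (fun p => (p.1 == a) && (p.2 == b)) l.
Definition mkS m n l : {set 'I_m * 'I_n} := [set u : 'I_m * 'I_n | inl l (nat_of_ord u.1) (nat_of_ord u.2)].
Definition fsum (F : nat -> nat) s := foldr (fun j a => F j + a) 0 s.
Definition check m n l := all (fun i => all (fun j =>
   2 + 2 * inl l i j <= fsum (fun j' => inl l i j') (iota 0 n) + fsum (fun i' => inl l i' j) (iota 0 m))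
   (iota 0 n)) (iota 0 m).
Definition size_of m n l := fsum (fun i => fsum (fun j => inl l i j) (iota 0 n)) (iota 0 m).

Lemma sum_fsum n (F : nat -> nat) : \sum_(j < n) F j = fsum F (iota 0 n).
Proof.
rewrite -(big_mkord xpredT F) /index_iota subn0.
by elim: (iota 0 n) => [|x s IH]; rewrite ?big_nil ?big_cons ?IH.
Qed.

Lemma upper m n l : check m n l -> total2dom (KK m n) (mkS m n l).
Proof.
move=> Hc; apply/forallP => v.
have := L1 (mkS m n l) v; rewrite rr_ord cc_ord.
under eq_bigr do rewrite inE /=.
under [X in _ = _ + X]eq_bigr do rewrite inE /=.
rewrite !(sum_fsum _ (fun j => inl l _ j)) !(sum_fsum _ (fun i => inl l i _)).
move/allP: Hc => /(_ v.1); rewrite mem_iota ltn_ord => /(_ isT).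
move/allP => /(_ v.2); rewrite mem_iota ltn_ord => /(_ isT).
rewrite inE => H1 H2; move: H1; rewrite -H2; move: (#|_|) (nat_of_bool _) => X b; lia.
Qed.

Lemma size_mkS m n l : #|mkS m n l| = size_of m n l.
Proof.
rewrite cardS_r /size_of -sum_fsum; apply: eq_bigr => i _.
rewrite rr_ord -sum_fsum; apply: eq_bigr => j _; by rewrite inE.
Qed.


Lemma c23 : is_gamma2t (KK 2 3) 4.
Proof.
split.
- exists (mkS 2 3 [:: (0, 0); (0, 1); (1, 0); (1, 1)]); split.
  + by apply: upper; vm_compute; reflexivity.
  + by rewrite size_mkS; vm_compute; reflexivity.
- by move=> S; apply: lbgen => *; lia.
Qed.

Lemma c34 : is_gamma2t (KK 3 4) 6.
Proof.
split.
- exists (mkS 3 4 [:: (0, 1); (0, 2); (1, 0); (1, 2); (2, 0); (2, 1)]); split.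
  + by apply: upper; vm_compute; reflexivity.
  + by rewrite size_mkS; vm_compute; reflexivity.
- by move=> S; apply: lbgen => *; lia.
Qed.

Lemma c45 : is_gamma2t (KK 4 5) 7.
Proof.
split.
- exists (mkS 4 5 [:: (0, 1); (0, 2); (0, 3); (0, 4); (1, 0); (2, 0); (3, 0)]); split.
  + by apply: upper; vm_compute; reflexivity.
  + by rewrite size_mkS; vm_compute; reflexivity.
- by move=> S; apply: lbgen => *; lia.
Qed.

Lemma c56 : is_gamma2t (KK 5 6) 9.
Proof.
split.
- exists (mkS 5 6 [:: (0, 1); (0, 2); (0, 3); (0, 4); (0, 5); (1, 0); (2, 0); (3, 0); (4, 0)]); split.
  + by apply: upper; vm_compute; reflexivity.
  + by rewrite size_mkS; vm_compute; reflexivity.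
- by move=> S; apply: lbgen => *; lia.
Qed.

Lemma c67 : is_gamma2t (KK 6 7) 10.
Proof.
split.
- exists (mkS 6 7 [:: (0, 1); (0, 2); (0, 3); (1, 4); (1, 5); (1, 6); (2, 0); (3, 0); (4, 0); (5, 0)]); split.
  + by apply: upper; vm_compute; reflexivity.
  + by rewrite size_mkS; vm_compute; reflexivity.
- by move=> S; apply: lbgen => *; lia.
Qed.

Lemma c24 : is_gamma2t (KK 2 4) 4.
Proof.
split.
- exists (mkS 2 4 [:: (0, 0); (0, 1); (1, 0); (1, 1)]); split.
  + by apply: upper; vm_compute; reflexivity.
  + by rewrite size_mkS; vm_compute; reflexivity.
- by move=> S; apply: lbgen => *; lia.
Qed.

Lemma c35 : is_gamma2t (KK 3 5) 6.
Proof.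
split.
- exists (mkS 3 5 [:: (0, 1); (0, 2); (1, 0); (1, 2); (2, 0); (2, 1)]); split.
  + by apply: upper; vm_compute; reflexivity.
  + by rewrite size_mkS; vm_compute; reflexivity.
- by move=> S; apply: lbgen => *; lia.
Qed.

Lemma c46 : is_gamma2t (KK 4 6) 8.
Proof.
split.
- exists (mkS 4 6 [:: (0, 0); (0, 1); (1, 0); (1, 1); (2, 2); (2, 3); (3, 2); (3, 3)]); split.
  + by apply: upper; vm_compute; reflexivity.
  + by rewrite size_mkS; vm_compute; reflexivity.
- by move=> S; apply: lbgen => *; lia.
Qed.

Lemma c57 : is_gamma2t (KK 5 7) 9.
Proof.
split.
- exists (mkS 5 7 [:: (0, 1); (0, 2); (0, 3); (1, 4); (1, 5); (1, 6); (2, 0); (3, 0); (4, 0)]); split.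
  + by apply: upper; vm_compute; reflexivity.
  + by rewrite size_mkS; vm_compute; reflexivity.
- by move=> S; apply: lbgen => *; lia.
Qed.

Lemma c68 : is_gamma2t (KK 6 8) 11.
Proof.
split.
- exists (mkS 6 8 [:: (0, 1); (0, 2); (0, 3); (1, 4); (1, 5); (1, 6); (1, 7); (2, 0); (3, 0); (4, 0); (5, 0)]); split.
  + by apply: upper; vm_compute; reflexivity.
  + by rewrite size_mkS; vm_compute; reflexivity.
- by move=> S; apply: lbgen => *; lia.
Qed.

Lemma c79 : is_gamma2t (KK 7 9) 13.
Proof.
split.
- exists (mkS 7 9 [:: (0, 2); (0, 3); (0, 4); (0, 5); (0, 6); (0, 7); (0, 8); (1, 0); (2, 0); (3, 0); (4, 1); (5, 1); (6, 1)]); split.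
  + by apply: upper; vm_compute; reflexivity.
  + by rewrite size_mkS; vm_compute; reflexivity.
- by move=> S; apply: lbgen => *; lia.
Qed.

Theorem proposition13 :
  is_gamma2t (KK 2 3) 4 /\ is_gamma2t (KK 3 4) 6 /\ is_gamma2t (KK 4 5) 7 /\
  is_gamma2t (KK 5 6) 9 /\ is_gamma2t (KK 6 7) 10 /\ is_gamma2t (KK 2 4) 4 /\
  is_gamma2t (KK 3 5) 6 /\ is_gamma2t (KK 4 6) 8 /\ is_gamma2t (KK 5 7) 9 /\
  is_gamma2t (KK 6 8) 11 /\ is_gamma2t (KK 7 9) 13.
Proof.
by split; [exact: c23|split; [exact: c34|split; [exact: c45|split; [exact: c56|
 split; [exact: c67|split; [exact: c24|split; [exact: c35|split; [exact: c46|
 split; [exact: c57|split; [exact: c68|exact: c79]]]]]]]]]].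
Qed.
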